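(* Let $\mathbb{F}_q$ be a finite field of characteristic $p\ge3$. For every $u\in\mathbb{F}_q\setminus\{0,1\}$, $$\#\mathcal{I}_{\mathrm{L},u}=\begin{cases}1,& u=-1 \text{ and } p=3,\\ 3,& u\in\{-1,2,2^{-1}\},\ q\equiv1,3,7\pmod 8,\ p>3,\\ 2,& u\in\{-1,2\},\ q\equiv5\pmod8,\\ 1,& u=2^{-1},\ q\equiv5\pmod8,\\ 2,& u^2-u+1=0,\ q\equiv1\pmod{12},\ p>3,\\ 1,& u^2-u+1=0,\ q\not\equiv1\pmod{12},\\ 3,& \chi_2(-1)=-1 \text{ and } u\notin\mathcal{B},\\ 2,& \chi_2(-1)=1,\ \chi_2(u)=\chi_2(1-u)=-1,\ u\notin\mathcal{B},\\ 4,& \chi_2(-1)=1,\ \chi_2(u)\chi_2(1-u)=-1,\ u\notin\mathcal{B},\\ 6,& \chi_2(-1)=1,\ \chi_2(u)=\chi_2(1-u)=1,\ u\notin\mathcal{B}.\end{cases}$$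
   Context: For $u\in\mathbb{F}_q\setminus\{0,1\}$, $E_{\mathrm{L},u}$ is the Legendre curve $Y^2=X(X-1)(X-u)$. Two elliptic curves in Weierstrass form are $\mathbb{F}_q$-isomorphic ($\cong_{\mathbb{F}_q}$) if one is transformed into the other by $X\mapsto\alpha^2\tilde X+\beta$, $Y\mapsto\alpha^3\tilde Y+\alpha^2\gamma\tilde X+\delta$ with $\alpha,\beta,\gamma,\delta\in\mathbb{F}_q$, $\alpha\ne0$. Define $\mathcal{I}_{\mathrm{L},u}=\{v\in\mathbb{F}_q\setminus\{0,1\}: E_{\mathrm{L},u}\cong_{\mathbb{F}_q}E_{\mathrm{L},v}\}$. Let $\mathcal{B}=\{u\in\mathbb{F}_q : (u^2-u+1)(u+1)(u-2)(2u-1)=0\}$. $\chi_2$ is the quadratic character of $\mathbb{F}_q$ ($\chi_2(w)=1$ if $w\ne0$ is a square, $-1$ if $w$ is a nonsquare). *)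

(* Defs.v *)
From HB Require Import structures.
From mathcomp Require Import all_boot all_order all_algebra.
Set Implicit Arguments. Unset Strict Implicit. Unset Printing Implicit Defensive.
Import Order.TTheory GRing.Theory Num.Theory.
Local Open Scope ring_scope.

Section Legendre.
Variable F : finFieldType.

(* Bivariate polynomials over F: outer variable is Y ('X), inner is X. *)
Definition cst2 (c : F) : {poly {poly F}} := c%:P%:P.
Definition varX : {poly {poly F}} := 'X%:P.
Definition varY : {poly {poly F}} := 'X.

Definition legcubic (R : pzRingType) (u x : R) : R := x * (x - 1) * (x - u).

Definition legendre_poly (u : F) : {poly {poly F}} :=
  varY ^+ 2 - legcubic (cst2 u) varX.

(* E_{L,u} ≅_{F_q} E_{L,v}: the substitution X -> a^2 X + b,
   Y -> a^3 Y + a^2 c X + d (a <> 0) transforms the Weierstrass equation of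
   E_{L,u} into that of E_{L,v}, i.e. the substituted polynomial equals
   a^6 times the polynomial of E_{L,v}. *)
Definition legendre_iso (u v : F) : bool :=
  [exists a : F, exists b : F, exists c : F, exists d : F,
    (a != 0) &&
    ((cst2 (a ^+ 3) * varY + cst2 (a ^+ 2 * c) * varX + cst2 d) ^+ 2
       - legcubic (cst2 u) (cst2 (a ^+ 2) * varX + cst2 b)
     == cst2 (a ^+ 6) * legendre_poly v)].

Definition I_L (u : F) : {set F} :=
  [set v : F | (v != 0) && (v != 1) && legendre_iso u v].

Definition chi2 (x : F) : int :=
  if x == 0 then 0 else if [exists y : F, y ^+ 2 == x] then 1 else -1.

Definition inB (u : F) : bool :=
  (u ^+ 2 - u + 1) * (u + 1) * (u - 2) * (2 * u - 1) == 0.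

End Legendre.

(* Main.v *)
Require Import Defs.
From HB Require Import structures.
From mathcomp Require Import all_boot all_order all_algebra.
From mathcomp Require Import all_fingroup all_solvable all_field.
From mathcomp Require Import ring zify.
Import Order.TTheory GRing.Theory Num.Theory.
Set Implicit Arguments. Unset Strict Implicit.
Local Open Scope ring_scope.

Section S.
Variable F : finFieldType.

Definition f2 (a b c u v : F) := (a^+2)^+2 * c^+2 - (a^+2)^+2 * (3*b-1-u) - (a^+2)^+3 * (1+v).
Definition f1 (a b c d u v : F) := 2 * a^+2 * c * d - a^+2 * (b*(b-1)+b*(b-u)+(b-1)*(b-u)) + (a^+2)^+3 * v.
Definition f0 (b d u : F) := d^+2 - b*(b-1)*(b-u).

Lemma key (u v a b c d : F) :
 (cst2 (a ^+ 3) * varY F + cst2 (a ^+ 2 * c) * varX F + cst2 d) ^+ 2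
   - legcubic (cst2 u) (cst2 (a ^+ 2) * varX F + cst2 b)
 - cst2 (a ^+ 6) * legendre_poly v
 = ((2*a^+5*c)%:P * 'X + (2*a^+3*d)%:P)%:P * 'X
   + ((f2 a b c u v)%:P * 'X^2 + (f1 a b c d u v)%:P * 'X + (f0 b d u)%:P)%:P.
Proof.
rewrite /legendre_poly /legcubic /cst2 /varX /varY /f2 /f1 /f0.
ring.
Qed.

Lemma coef2 (R : nzRingType) (c0 c1 c2 : R) :
  let P := c2%:P * 'X^2 + c1%:P * 'X + c0%:P in P`_0 = c0 /\ P`_1 = c1 /\ P`_2 = c2.
Proof. by rewrite /= !coefD !coefCM !coefXn !coefX !coefC /= !mulr0 !mulr1 !addr0 !add0r. Qed.

Lemma coef1 (R : nzRingType) (c0 c1 : R) :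
  let P := c1%:P * 'X + c0%:P in P`_0 = c0 /\ P`_1 = c1.
Proof. by rewrite /= !coefD !coefCM !coefX !coefC /= !mulr0 !mulr1 !addr0 !add0r. Qed.

Definition sq (x : F) := [exists y : F, y ^+ 2 == x].

Lemma two_neq0 p : p \in [pchar F] -> (3 <= p)%N -> (2 : F) != 0.
Proof.
move=> hp h3; rewrite -(dvdn_pcharf hp 2).
apply/negP => /(dvdn_leq) h; have := h isT. by case: p h3 {hp h} => [|[|[|]]].
Qed.

Lemma iso_eqns (u v : F) : (2 : F) != 0 ->
  legendre_iso u v = [exists a : F, exists b : F, (a != 0) &&
    [&& f2 a b 0 u v == 0, f1 a b 0 0 u v == 0 & f0 b 0 u == 0]].
Proof.
move=> h2; apply/existsP/existsP => [[a /existsP [b /existsP [c /existsP [d /andP [a0 /eqP E]]]]]|[a /existsP [b /andP [a0 /and3P [/eqP E2 /eqP E1 /eqP E0]]]]].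
  move/eqP: E; rewrite -subr_eq0 key => /eqP E.
  have := congr1 (fun P : {poly {poly F}} => P`_1) E; have := congr1 (fun P : {poly {poly F}} => P`_0) E.
  have [C0 C1] := @coef1 _ ((f2 a b c u v)%:P * 'X^2 + (f1 a b c d u v)%:P * 'X + (f0 b d u)%:P)
       ((2*a^+5*c)%:P * 'X + (2*a^+3*d)%:P).
  rewrite /= in C0 C1; rewrite C0 C1 !coef0 => H0 H1.
  have [D0 D1] := @coef1 _ (2*a^+3*d) (2*a^+5*c).
  have [G0 [G1 G2]] := @coef2 _ (f0 b d u) (f1 a b c d u v) (f2 a b c u v).
  rewrite /= in D0 D1 G0 G1 G2.
  have c0 : c = 0.
    move: (congr1 (fun P : {poly F} => P`_1) H1); rewrite D1 coef0 => /eqP.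
    by rewrite !mulf_eq0 (negPf h2) (negPf a0) /= => /eqP.
  have d0 : d = 0.
    move: (congr1 (fun P : {poly F} => P`_0) H1); rewrite D0 coef0 => /eqP.
    by rewrite !mulf_eq0 (negPf h2) (negPf a0) /= => /eqP.
  subst c d.
  exists a; apply/existsP; exists b; rewrite a0 /=.
  move: (congr1 (fun P : {poly F} => P`_0) H0) (congr1 (fun P : {poly F} => P`_1) H0) (congr1 (fun P : {poly F} => P`_2) H0).
  by rewrite G0 G1 G2 !coef0 => -> -> ->; rewrite eqxx.
exists a; apply/existsP; exists b; apply/existsP; exists 0; apply/existsP; exists 0.
rewrite a0 /= -subr_eq0 key E2 E1 E0.
by rewrite !(mulr0, mul0r, addr0, add0r, polyC0).
Qed.

Definition e1 (b u : F) := b*(b-1)+b*(b-u)+(b-1)*(b-u).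

Lemma fwd (a b u v : F) : a != 0 ->
  [&& f2 a b 0 u v == 0, f1 a b 0 0 u v == 0 & f0 b 0 u == 0] ->
  [/\ b*(b-1)*(b-u) = 0, a^+2*(1+v) = 1+u-3*b & (a^+2)^+2 * v = e1 b u].
Proof.
move=> a0 /and3P [/eqP E2 /eqP E1 /eqP E0].
have s0 : a^+2 != 0 by rewrite expf_eq0 (negPf a0) andbF.
split.
- by move: E0; rewrite /f0 expr0n /= sub0r => /eqP; rewrite oppr_eq0 => /eqP.
- have H : (a^+2)^+2 * ((a^+2)*(1+v) - (1+u-3*b)) = - f2 a b 0 u v by rewrite /f2; ring.
  move: H; rewrite E2 oppr0 => /eqP; rewrite mulf_eq0 expf_eq0 (negPf s0) andbF /=.
  by rewrite subr_eq0 => /eqP.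
- have H : (a^+2) * ((a^+2)^+2 * v - e1 b u) = f1 a b 0 0 u v by rewrite /f1 /e1; ring.
  move: H; rewrite E1 => /eqP; rewrite mulf_eq0 (negPf s0) /=.
  by rewrite subr_eq0 => /eqP.
Qed.

Lemma bwd (a b u v t1 t2 : F) : t1 != 0 -> a^+2 = t1 -> v = t2 / t1 ->
  t1 + t2 = 1+u-3*b -> t1*t2 = e1 b u -> b*(b-1)*(b-u) = 0 ->
  [&& f2 a b 0 u v == 0, f1 a b 0 0 u v == 0 & f0 b 0 u == 0].
Proof.
move=> t0 ha hv hs hp h0.
have sv : t1 * v = t2 by rewrite hv mulrC divfK.
apply/and3P; split; apply/eqP.
- rewrite /f2 ha.
  have -> : t1^+3 * (1+v) = t1^+2 * (t1 + t1*v) by ring.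
  rewrite sv hs; ring.
- rewrite /f1 ha.
  have -> : t1^+3 * v = t1^+2 * (t1*v) by ring.
  rewrite sv -/(e1 b u) -hp; ring.
- by rewrite /f0 h0 expr0n /= subrr.
Qed.

Lemma solve (s v t1 t2 : F) : s != 0 -> s*(1+v) = t1+t2 -> s^+2 * v = t1*t2 ->
  (s = t1 /\ v = t2/t1) \/ (s = t2 /\ v = t1/t2).
Proof.
move=> s0 h1 h2.
have : (s - t1) * (s - t2) = 0.
  have -> : (s - t1) * (s - t2) = s^+2 - (t1+t2)*s + t1*t2 by ring.
  rewrite -h1 -h2; ring.
move/eqP; rewrite mulf_eq0 !subr_eq0 => /orP [/eqP e|/eqP e]; [left|right]; subst; split => //.
  apply: (mulfI s0); rewrite mulrCA divff // mulr1.
  by apply: (mulfI s0); rewrite mulrA -expr2 h2.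
apply: (mulfI s0); rewrite mulrCA divff // mulr1.
by apply: (mulfI s0); rewrite mulrA -expr2 h2 mulrC.
Qed.

Lemma mkiso (a b u v t1 t2 : F) : t1 != 0 -> a^+2 = t1 -> v = t2 / t1 ->
  t1 + t2 = 1+u-3*b -> t1*t2 = e1 b u -> b*(b-1)*(b-u) = 0 ->
  [exists a : F, exists b : F, (a != 0) &&
    [&& f2 a b 0 u v == 0, f1 a b 0 0 u v == 0 & f0 b 0 u == 0]].
Proof.
move=> t0 ha hv hs hp h0; apply/existsP; exists a; apply/existsP; exists b.
rewrite (bwd t0 ha hv hs hp h0) andbT.
by apply: contraNneq t0 => a0; rewrite -ha a0 expr0n.
Qed.

Lemma isoP (u v : F) : (2:F) != 0 -> u != 0 -> u != 1 ->
  legendre_iso u v = [|| v == u, (v == 1 - u) && sq (-1), (v == u^-1) && sq u,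
     (v == (u-1)/u) && sq (-u), (v == (1-u)^-1) && sq (u-1) | (v == u/(u-1)) && sq (1-u)].
Proof.
move=> h2 u0 u1.
have u10 : u - 1 != 0 by rewrite subr_eq0.
have u10' : 1 - u != 0 by rewrite subr_eq0 eq_sym.
have m10 : (-1 : F) != 0 by rewrite oppr_eq0 oner_neq0.
have mu0 : - u != 0 by rewrite oppr_eq0.
rewrite iso_eqns //; apply/idP/idP.
- case/existsP => a /existsP [b /andP [a0 H]].
  have [h0 hs hp] := fwd a0 H.
  have s0 : a^+2 != 0 by rewrite expf_eq0 (negPf a0) andbF.
  have sqa : sq (a^+2) by apply/existsP; exists a.
  move: h0 => /eqP; rewrite !mulf_eq0 !subr_eq0 => /orP [/orP [/eqP eb|/eqP eb] | /eqP eb]; subst b.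
  + have hs' : a^+2 * (1+v) = 1 + u by rewrite hs; ring.
    have hp' : (a^+2)^+2 * v = 1 * u by rewrite hp /e1; ring.
    have [[e ev]|[e ev]] := solve s0 hs' hp'.
      by rewrite ev divr1 eqxx.
    have -> : (v == u^-1) && sq u by rewrite ev div1r eqxx -e.
    by rewrite !orbT.
  + have hs' : a^+2 * (1+v) = -1 + (u-1) by rewrite hs; ring.
    have hp' : (a^+2)^+2 * v = -1 * (u-1) by rewrite hp /e1; ring.
    have [[e ev]|[e ev]] := solve s0 hs' hp'.
      have -> : (v == 1 - u) && sq (-1) by rewrite ev -e sqa andbT; apply/eqP; rewrite e invrN1 mulrN1 opprB.
      by rewrite !orbT.
    have -> : (v == (1-u)^-1) && sq (u-1) by rewrite ev -e sqa andbT; apply/eqP; rewrite e mulN1r -invrN opprB.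
    by rewrite !orbT.
  + have hs' : a^+2 * (1+v) = -u + (1-u) by rewrite hs; ring.
    have hp' : (a^+2)^+2 * v = -u * (1-u) by rewrite hp /e1; ring.
    have [[e ev]|[e ev]] := solve s0 hs' hp'.
      have -> : (v == (u-1)/u) && sq (-u) by rewrite ev -e sqa andbT; apply/eqP; rewrite e invrN mulrN -mulNr opprB.
      by rewrite !orbT.
    have -> : (v == u/(u-1)) && sq (1-u)  by rewrite ev -e sqa andbT; apply/eqP; rewrite e -[in RHS](opprB 1 u) invrN mulrN mulNr.
    by rewrite !orbT.
- case/orP => [/eqP H | /orP [H | /orP [H | /orP [H | /orP [H | H]]]]].
  + apply: (mkiso (a:=1) (b:=0) (t1:=1) (t2:=u)).
    * exact: oner_neq0.
    * exact: expr1n.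
    * by rewrite H divr1.
    * ring.
    * rewrite /e1; ring.
    * ring.
  + case/andP: H => /eqP H /existsP [y /eqP hy].
    apply: (mkiso (a:=y) (b:=1) (t1:=-1) (t2:=u-1)) => //.
    * by rewrite H invrN1 mulrN1 opprB.
    * ring.
    * rewrite /e1; ring.
    * ring.
  + case/andP: H => /eqP H /existsP [y /eqP hy].
    apply: (mkiso (a:=y) (b:=0) (t1:=u) (t2:=1)) => //.
    * by rewrite H div1r.
    * ring.
    * rewrite /e1; ring.
    * ring.
  + case/andP: H => /eqP H /existsP [y /eqP hy].
    apply: (mkiso (a:=y) (b:=u) (t1:=-u) (t2:=1-u)) => //.
    * by rewrite H invrN mulrN -mulNr opprB.
    * ring.
    * rewrite /e1; ring.
    * ring.
  + case/andP: H => /eqP H /existsP [y /eqP hy].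
    apply: (mkiso (a:=y) (b:=1) (t1:=u-1) (t2:=-1)) => //.
    * by rewrite H mulN1r -invrN opprB.
    * ring.
    * rewrite /e1; ring.
    * ring.
  + case/andP: H => /eqP H /existsP [y /eqP hy].
    apply: (mkiso (a:=y) (b:=u) (t1:=1-u) (t2:=-u)) => //.
    * by rewrite H -[in LHS](opprB 1 u) invrN mulrN mulNr.
    * ring.
    * rewrite /e1; ring.
    * ring.
Qed.

Definition cands (u : F) : seq (F * bool) :=
  [:: (u, true); (1-u, sq (-1)); (u^-1, sq u); ((u-1)/u, sq (-u));
      ((1-u)^-1, sq (u-1)); (u/(u-1), sq (1-u))].
Definition Ls (u : F) := [seq x.1 | x <- cands u & x.2].

Lemma mem_fl (s : seq (F * bool)) v :
  (v \in [seq x.1 | x <- s & x.2]) = has (fun x => (v == x.1) && x.2) s.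
Proof.
elim: s => [|[x b] s IH] //=; case: b => /=; rewrite ?inE IH ?andbT ?andbF //.
Qed.

Lemma memIL (u v : F) : (2:F) != 0 -> u != 0 -> u != 1 ->
  (v \in I_L u) = (v \in Ls u).
Proof.
move=> h2 u0 u1; rewrite /I_L inE isoP // mem_fl /cands /= !andbT orbF.
apply/idP/idP => [/andP [] //|H]; rewrite H andbT.
have u10 : u - 1 != 0 by rewrite subr_eq0.
have u10' : 1 - u != 0 by rewrite subr_eq0 eq_sym.
move: H => /orP [/eqP ->|/orP [/andP [/eqP -> _]|/orP [/andP [/eqP -> _]|/orP [/andP [/eqP -> _]|/orP [/andP [/eqP -> _]|/andP [/eqP -> _]]]]]].
- by rewrite u0.
- by rewrite u10' /= subr_eq addrC -subr_eq subrr eq_sym.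
- by rewrite invr_eq0 u0 invr_eq1.
- rewrite mulf_neq0 ?invr_eq0 //=; apply/negP => /eqP e.
  have : u - 1 = u by rewrite -[LHS](divfK u0) e mul1r.
  by move/eqP; rewrite -subr_eq0 addrAC subrr add0r oppr_eq0 oner_eq0.
- by rewrite invr_eq0 u10' invr_eq1 /= subr_eq addrC -subr_eq subrr eq_sym.
- rewrite mulf_neq0 ?invr_eq0 //=; apply/negP => /eqP e.
  have : u = u - 1 by rewrite -[LHS](divfK u10) e mul1r.
  by move/eqP; rewrite -subr_eq0 opprB addrC subrK oner_eq0.
Qed.

Lemma card_eqi (A : {set F}) (s : seq F) : A =i s -> uniq s -> #|A| = size s.
Proof. by move=> H U; rewrite (eq_card H); apply/card_uniqP. Qed.
End S.

Section N.
Variable F : finFieldType.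
Variable p : nat.
Hypothesis hp : p \in [pchar F].
Hypothesis hp3 : (3 <= p)%N.

Local Notation q := #|F|.
Local Notation h := (#|F|.-1)./2.

Lemma cardF : exists k, #|F| = (p ^ k.+1)%N.
Proof.
have pr := pcharf_prime hp.
have := fin_ring_pchar_abelem hp.
move/abelem_pgroup/card_pgroup; rewrite cardsT.
case: (logn p #|F|) => [|k] e; last by exists k.
have := finNzRing_gt1 F; by rewrite e.
Qed.

Lemma p_odd : odd p.
Proof. by case: (even_prime (pcharf_prime hp)) => // e; move: hp3; rewrite e. Qed.

Lemma q_odd : odd q.
Proof. by have [k ->] := cardF; rewrite oddX p_odd orbT. Qed.

Lemma q_gt1 : (1 < q)%N. Proof. exact: finNzRing_gt1. Qed.

Lemma qh : q = (h.*2).+1.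
Proof.
have := q_odd; have := q_gt1; case: #|F| => [|n] //= _ on.
by rewrite -[n in LHS](odd_double_half n) (negPf on) add0n.
Qed.

Lemma expq1 (x : F) : x != 0 -> x ^+ (q.-1) = 1.
Proof.
move=> x0; apply: (mulfI x0); rewrite mulr1 -exprS prednK ?expf_card //.
by apply: ltnW; apply: q_gt1.
Qed.

Lemma two0 : (2 : F) != 0. Proof. exact: (two_neq0 hp hp3). Qed.

Lemma m1n1 : (-1 : F) != 1.
Proof.
apply/negP => /eqP e; have := two0; rewrite -[2]/(1 + 1 : F).
by rewrite -{1}e addNr eqxx.
Qed.

Lemma pow_pm1 (x : F) : x != 0 -> x ^+ h = 1 \/ x ^+ h = -1.
Proof.
move=> x0; have : (x ^+ h - 1) * (x ^+ h + 1) = 0.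
  have -> : (x ^+ h - 1) * (x ^+ h + 1) = x ^+ (h.*2) - 1.
    by rewrite -addnn exprD; ring.
  by rewrite -[h.*2]/(h.*2.+1.-1) -qh expq1 // subrr.
move/eqP; rewrite mulf_eq0 subr_eq0 addr_eq0 => /orP [/eqP ->|/eqP ->]; by [left|right].
Qed.

Lemma sq_pow (x : F) : x != 0 -> sq x -> x ^+ h = 1.
Proof.
move=> x0 /existsP [y /eqP e]; subst x.
have y0 : y != 0 by apply: contraNneq x0 => ->; rewrite expr0n.
by rewrite -exprM mul2n -[h.*2]/(h.*2.+1.-1) -qh expq1.
Qed.

Lemma nonres : exists x : F, x != 0 /\ x ^+ h = -1.
Proof.
case: (boolP [exists x : F, (x != 0) && (x ^+ h != 1)]).
  case/existsP => x /andP [x0 xh]; exists x; split => //.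
  by case: (pow_pm1 x0) => // e; rewrite e eqxx in xh.
rewrite negb_exists => /forallP H.
have P0 : ('X^h - 1 : {poly F}) != 0.
  apply/negP => /eqP e.
  have := congr1 (fun P : {poly F} => P`_0) e.
  rewrite coef0 coefB coefXn coefC /=.
  case: (h =P 0)%N => [h0|/eqP hn].
    have := qh; rewrite h0 /= => q1; have := q_gt1; by rewrite q1.
  by rewrite eq_sym (negPf hn) sub0r => /eqP; rewrite oppr_eq0 oner_eq0.
have := @max_poly_roots _ ('X^h - 1) [seq x <- enum F | x != 0] P0.
have -> : all (root ('X^h - 1)) [seq x <- enum F | x != 0].
  apply/allP => x; rewrite mem_filter => /andP [x0 _].
  have := H x; rewrite x0 /= negbK => /eqP xh.
  by rewrite rootE !hornerE xh subrr.
rewrite filter_uniq ?enum_uniq // => /(_ isT isT).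
rewrite size_filter.
have -> : count (fun x : F => x != 0) (enum F) = q.-1.
  rewrite -(cardC1 (0:F)) cardE /enum_mem size_filter. rewrite count_filter.
  by apply: eq_count => x; rewrite !inE ?andbT.
case: (h =P 0)%N => [h0|hn0].
  have := qh; rewrite h0 /= => q1; have := q_gt1; by rewrite q1.
rewrite size_Xn_sub_1 ?lt0n; last by apply/eqP.
have e : (#|F|.-1 = ((#|F|.-1)./2).*2)%N by rewrite {1}qh.
rewrite e => hh; move: hn0 hh; move: (#|F|.-1./2) => k; lia.
Qed.

Lemma hq_eq : (q = 2 * h + 1)%N.
Proof. by rewrite {1}qh -mul2n addn1. Qed.

Lemma S1 : (q %% 4 = 1)%N -> sq (-1 : F).
Proof.
move=> q4; have [x [x0 xh]] := nonres.
have hm : h = (2 * (q %/ 4))%N.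
  have := divn_eq q 4; rewrite q4; have := hq_eq; lia.
apply/existsP; exists (x ^+ (q %/ 4)); by rewrite -exprM mulnC -hm xh.
Qed.

Lemma m10 : (-1 : F) != 0. Proof. by rewrite oppr_eq0 oner_eq0. Qed.

Lemma S2 : (q %% 4 = 3)%N -> ~~ sq (-1 : F).
Proof.
move=> q4; apply/negP => s1; have := sq_pow m10 s1.
have hm : h = (2 * (q %/ 4) + 1)%N.
  have := divn_eq q 4; rewrite q4; have := hq_eq; lia.
rewrite hm exprD expr1 exprM sqrrN !expr1n mul1r => e.
by move: m1n1; rewrite e eqxx.
Qed.

Lemma S3 : (q %% 8 = 1)%N -> sq (2:F).
Proof.
move=> q8; have [x [x0 xh]] := nonres.
have hm : h = (4 * (q %/ 8))%N.
  have := divn_eq q 8; rewrite q8; have := hq_eq; lia.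
set z := x ^+ (q %/ 8).
have z4 : z ^+ 4 = -1 by rewrite /z -exprM mulnC -hm xh.
apply/existsP; exists (z - z ^+ 3); apply/eqP.
have -> : (z - z ^+ 3) ^+ 2 = 2 + (z^+2 - 2) * (1 + z^+4) by ring.
by rewrite z4 subrr mulr0 addr0.
Qed.

Lemma sq_mul (x y : F) : sq x -> sq y -> sq (x * y).
Proof.
move=> /existsP [a /eqP <-] /existsP [b /eqP <-]; apply/existsP; exists (a * b).
by rewrite exprMn.
Qed.

Lemma sq_inv (x : F) : sq x -> sq (x^-1).
Proof.
move=> /existsP [a /eqP <-]; apply/existsP; exists (a^-1); by rewrite exprVn.
Qed.

Lemma S4 : (q %% 8 = 5)%N -> ~~ sq (2:F) && ~~ sq (-2:F).
Proof.
move=> q8.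
have q4 : (q %% 4 = 1)%N by rewrite -(modn_dvdm q (isT : (4 %| 8)%N)) q8.
have /existsP [i /eqP i2] := S1 q4.
have i0 : i != 0 by apply: contraNneq m10 => i0; rewrite -i2 i0 expr0n.
have hm : h = (4 * (q %/ 8) + 2)%N.
  have := divn_eq q 8; rewrite q8; have := hq_eq; lia.
have nsi : ~~ sq i.
  apply/negP => si; have := sq_pow i0 si.
  have i4 : i ^+ 4 = 1 by rewrite -[4%N]/(2*2)%N exprM i2 sqrrN expr1n.
  rewrite hm exprD exprM i4 expr1n mul1r i2.
  by move=> e; move: m1n1; rewrite e eqxx.
have n2 : ~~ sq (2:F).
  apply/negP => s2; move/negP: nsi; apply.
  have -> : i = (1+i)^+2 * 2^-1.
    have -> : (1+i)^+2 = 2 * i + (1 + i^+2) by ring.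
    by rewrite i2 subrr addr0 mulrC mulrA mulVf ?two0 // mul1r.
  apply: sq_mul; last exact: sq_inv.
  by apply/existsP; exists (1 + i).
rewrite n2 /=; apply/negP => s2; move/negP: n2; apply.
have -> : (2:F) = -2 * i^+2 by rewrite i2 mulrN1 opprK.
by apply: sq_mul => //; apply/existsP; exists i.
Qed.

Lemma S6 (x : F) : (q %% 4 = 3)%N -> x != 0 -> sq x || sq (-x).
Proof.
move=> q4 x0.
have hm : h = (2 * (q %/ 4) + 1)%N.
  have := divn_eq q 4; rewrite q4; have := hq_eq; lia.
have e : (x ^+ (q %/ 4 + 1)) ^+ 2 = x * x ^+ h.
  by rewrite -exprM hm -exprS; congr (_ ^+ _); lia.
case: (pow_pm1 x0) => xh; rewrite xh in e.
  by apply/orP; left; apply/existsP; exists (x ^+ (q %/ 4 + 1)); rewrite e mulr1.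
by apply/orP; right; apply/existsP; exists (x ^+ (q %/ 4 + 1)); rewrite e mulrN1.
Qed.

Lemma ring_comb (R : comRingType) (X M A B C D P2 sg S1 S2 S3 Y : R) :
  M = X^+2 + 1 -> Y = (1+X)*(1+X*A) -> A = -1 + M*S1 -> Y = C -> C = D + M*S2 ->
  D = P2*B -> B = sg + M*S3 -> P2*sg - 2 = M*((1+X)*X*S1 - S2 - P2*S3 - 1).
Proof.
move=> hM h1 h2 h3 h4 h5 h6.
have e : P2*sg = Y - M*S2 - P2*M*S3 by rewrite h3 h4 h5 h6; ring.
by rewrite e h1 h2 hM; ring.
Qed.

Lemma powcong (R : comRingType) (x y : R) n : exists S, x^+n = y^+n + (x - y) * S.
Proof. by exists (\sum_(i < n) x ^+ (n.-1 - i) * y ^+ i); rewrite -subrXX addrC subrK. Qed.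

Lemma S5 : (q %% 4 = 3)%N -> (2:F) = 2^+(h.+1) * (-1)^+((q %/ 4).+1).
Proof.
move=> q4.
have hm : h = (2 * (q %/ 4) + 1)%N.
  have := divn_eq q 4; rewrite q4; have := hq_eq; lia.
have qe := hq_eq.
have fro : (1 + 'X : {poly F})^+q = 1 + 'X ^+ q.
  rewrite -[in RHS](expr1n _ q); apply: exprDn_pchar; have [k ->] := cardF.
  by rewrite pnatX pnatE ?(pcharf_prime hp) // (pchar_poly _ p) hp.
move: (q %/ 4)%N hm => m; move: (h) qe => k qe hm.
set X := 'X : {poly F}.
have [S1 e1] := powcong (X^+2) (-1) k.
have [S2 e2] := powcong ((1+X)^+2) (2*X) k.+1.
have [S3 e3] := powcong (X^+2) (-1) m.+1.
set M := 'X^2 - (-1 : F)%:P.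
have hM : M = X^+2 + 1 by rewrite /M polyCN polyC1 opprK.
have h1 : (1 + X) ^+ q.+1 = (1+X) * (1 + X * (X^+2)^+k).
  by rewrite exprS fro qe addn1 exprS -exprM mul2n.
have h2 : (X^+2)^+k = -1 + M * S1.
  by rewrite e1 hm exprD expr1 exprM sqrrN !expr1n mul1r opprK hM.
have h3 : (1+X)^+q.+1 = ((1+X)^+2)^+k.+1.
  by rewrite -exprM; congr (_ ^+ _); rewrite qe; lia.
have h4 : ((1+X)^+2)^+k.+1 = (2*X)^+k.+1 + M * S2.
  by rewrite e2 hM; congr (_ + _ * _); ring.
have h5 : (2*X)^+k.+1 = 2^+k.+1 * (X^+2)^+m.+1.
  by rewrite exprMn -exprM; congr (_ * _ ^+ _); lia.
have h6 : (X^+2)^+m.+1 = (-1)^+m.+1 + M * S3 by rewrite e3 opprK hM.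
have E := ring_comb hM h1 h2 h3 h4 h5 h6.
set c : F := 2^+k.+1 * (-1)^+m.+1 - 2.
have Ec : c%:P = M * ((1 + X) * X * S1 - S2 - 2 ^+ k.+1 * S3 - 1).
  by rewrite -E /c rmorphB rmorphM !rmorphXn rmorphN rmorph1 !rmorph_nat.
apply/eqP; rewrite eq_sym -subr_eq0 -/c; case: (eqVneq c 0) => // c0; exfalso.
have : M %| c%:P by rewrite Ec dvdp_mulr ?dvdpp.
move/(dvdp_leq _); rewrite polyC_eq0 => /(_ c0).
by rewrite size_polyC c0 /M size_XnsubC.
Qed.

Lemma S5a : (q %% 8 = 7)%N -> sq (2:F).
Proof.
move=> q8.
have q4 : (q %% 4 = 3)%N by rewrite -(modn_dvdm q (isT : (4 %| 8)%N)) q8.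
have e := S5 q4.
have E1 : ((q %/ 4).+1 = 2 * (q %/ 8 + 1))%N by lia.
have E2 : (h.+1 = 2 * (2 * (q %/ 8) + 2))%N by have := hq_eq; lia.
rewrite E1 E2 (exprM (-1)) sqrrN !expr1n mulr1 in e.
by apply/existsP; exists (2 ^+ (2 * (q %/ 8) + 2)); rewrite {2}e -exprM mulnC.
Qed.

Lemma S5b : (q %% 8 = 3)%N -> sq (-2:F).
Proof.
move=> q8.
have q4 : (q %% 4 = 3)%N by rewrite -(modn_dvdm q (isT : (4 %| 8)%N)) q8.
have e := S5 q4.
have E1 : ((q %/ 4).+1 = 2 * (q %/ 8) + 1)%N by lia.
have E2 : (h.+1 = 2 * (2 * (q %/ 8) + 1))%N by have := hq_eq; lia.
rewrite E1 E2 exprD (exprM (-1)) sqrrN !expr1n mul1r expr1 mulrN1 in e.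
by apply/existsP; exists (2 ^+ (2 * (q %/ 8) + 1)); rewrite {2}e opprK -exprM mulnC.
Qed.
End N.

Ltac fs := repeat (apply/andP; split); try assumption.

Section M.
Variable F : finFieldType.

Lemma neqd (x y n d : F) : x - y = n / d -> n != 0 -> d != 0 -> x != y.
Proof.
move=> e n0 d0; apply/negP => /eqP xy; move: e; rewrite xy subrr => /eqP.
by rewrite eq_sym mulf_eq0 invr_eq0 (negPf n0) (negPf d0).
Qed.

Lemma uniq6 (u : F) : u != 0 -> u != 1 -> ~~ inB u ->
  uniq [:: u; 1-u; u^-1; (u-1)/u; (1-u)^-1; u/(u-1)].
Proof.
move=> u0 u1; rewrite /inB !mulf_eq0 !negb_or => /andP [/andP [/andP [w0 p0] m0] t0].
have u10 : u - 1 != 0 by rewrite subr_eq0.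
have u10' : 1 - u != 0 by rewrite subr_eq0 eq_sym.
have t0' : 1 - 2*u != 0 by rewrite -opprB oppr_eq0 -[2*u - 1]/(2*u-1).
have m0' : 2 - u != 0 by rewrite -opprB oppr_eq0.
have o0 : (1:F) != 0 := oner_neq0 _.
have w0' : -(u^+2-u+1) != 0 by rewrite oppr_eq0.
have p0' : 1 + u != 0 by rewrite addrC.
have n1 : u != 1 - u by apply: (neqd (n:=(2*u-1)) (d:=1)) => //; field; fs.
have n2 : u != u^-1 by apply: (neqd (n:=((u-1)*(u+1))) (d:=u)) => //; [field; fs | exact: mulf_neq0].
have n3 : u != (u-1)/u by apply: (neqd (n:=(u^+2-u+1)) (d:=u)) => //; field; fs.
have n4 : u != (1-u)^-1 by apply: (neqd (n:=(-(u^+2-u+1))) (d:=(1-u))) => //; field; fs.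
have n5 : u != u/(u-1) by apply: (neqd (n:=(u*(u-2))) (d:=(u-1))) => //; [field; fs | exact: mulf_neq0].
have n6 : 1 - u != u^-1 by apply: (neqd (n:=(-(u^+2-u+1))) (d:=u)) => //; field; fs.
have n7 : 1 - u != (u-1)/u by apply: (neqd (n:=((1-u)*(u+1))) (d:=u)) => //; [field; fs | exact: mulf_neq0].
have n8 : 1 - u != (1-u)^-1 by apply: (neqd (n:=(u*(u-2))) (d:=(1-u))) => //; [field; fs | exact: mulf_neq0].
have n9 : 1 - u != u/(u-1) by apply: (neqd (n:=(-(u^+2-u+1))) (d:=(u-1))) => //; field; fs.
have n10 : u^-1 != (u-1)/u by apply: (neqd (n:=(2-u)) (d:=u)) => //; field; fs.
have n11 : u^-1 != (1-u)^-1 by apply: (neqd (n:=(1-2*u)) (d:=(u*(1-u)))) => //; [field; fs | exact: mulf_neq0].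
have n12 : u^-1 != u/(u-1) by apply: (neqd (n:=(-(u^+2-u+1))) (d:=(u*(u-1)))) => //; [field; fs | exact: mulf_neq0].
have n13 : (u-1)/u != (1-u)^-1 by apply: (neqd (n:=(-(u^+2-u+1))) (d:=(u*(1-u)))) => //; [field; fs | exact: mulf_neq0].
have n14 : (u-1)/u != u/(u-1) by apply: (neqd (n:=(1-2*u)) (d:=(u*(u-1)))) => //; [field; fs | exact: mulf_neq0].
have n15 : (1-u)^-1 != u/(u-1) by apply: (neqd (n:=(1+u)) (d:=(1-u))) => //; field; fs.
rewrite /= !inE !negb_or.
by rewrite n1 n2 n3 n4 n5 n6 n7 n8 n9 n10 n11 n12 n13 n14 n15.
Qed.

Lemma chiE (x : F) : chi2 x = if x == 0 then 0 else if sq x then 1 else -1.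
Proof. by []. Qed.

Lemma card_gen (u : F) : (2:F) != 0 -> u != 0 -> u != 1 -> ~~ inB u ->
  #|I_L u| = (1 + sq (-1 : F)%R + sq u + sq (-u)%R + sq (u-1)%R + sq (1-u)%R)%N.
Proof.
move=> h2 u0 u1 nB.
rewrite (@card_eqi _ _ (Ls u)).
- rewrite size_map size_filter /=; lia.
- by move=> v; apply: memIL.
apply: (@subseq_uniq _ _ [seq x.1 | x <- cands u]); last exact: uniq6.
exact/map_subseq/filter_subseq.
Qed.

Lemma card_one (A : {set F}) a : (forall v, (v \in A) = (v == a)) -> #|A| = 1%N.
Proof. by move=> H; rewrite (@card_eqi _ _ [:: a]) // => v; rewrite H inE. Qed.

Lemma card_two (A : {set F}) a b (G : bool) : a != b ->
  (forall v, (v \in A) = (v == a) || (v == b) && G) -> #|A| = (1 + G)%N.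
Proof.
move=> ab H; case: G H => H.
  by rewrite (@card_eqi _ _ [:: a; b]) //= ?inE ?ab // => v; rewrite H !inE andbT.
by rewrite (@card_eqi _ _ [:: a]) // => v; rewrite H !inE andbF orbF.
Qed.

Lemma card_three (A : {set F}) a b c (G : bool) : a != b -> a != c -> b != c ->
  (forall v, (v \in A) = [|| v == a, v == b | (v == c) && G]) -> #|A| = (2 + G)%N.
Proof.
move=> ab ac bc H; case: G H => H.
  by rewrite (@card_eqi _ _ [:: a; b; c]) //= ?inE ?negb_or ?ab ?ac ?bc // => v; rewrite H !inE andbT.
by rewrite (@card_eqi _ _ [:: a; b]) //= ?inE ?ab // => v; rewrite H !inE andbF orbF.
Qed.

Lemma card_three' (A : {set F}) a b c (G : bool) : a != b -> a != c -> b != c ->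
  (forall v, (v \in A) = (v == a) || ((v == b) || (v == c)) && G) -> #|A| = (1 + 2 * G)%N.
Proof.
move=> ab ac bc H; case: G H => H.
  by rewrite (@card_eqi _ _ [:: a; b; c]) //= ?inE ?negb_or ?ab ?ac ?bc // => v; rewrite H !inE andbT.
by rewrite (@card_eqi _ _ [:: a]) // => v; rewrite H !inE andbF orbF.
Qed.

Lemma sq1 : sq (1 : F). Proof. by apply/existsP; exists 1; rewrite expr1n. Qed.

Lemma sqV (x : F) : sq (x^-1) = sq x.
Proof. by apply/idP/idP => /sq_inv; rewrite ?invrK. Qed.

Lemma vals (h2 : (2:F) != 0) (h3 : (3:F) != 0) :
  [/\ (-1:F) != 2, (-1:F) != 2^-1 & (2:F) != 2^-1].
Proof.
have t : (2:F) * 2^-1 = 1 by rewrite divff.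
split; apply/negP => /eqP e; move/negP: h3; apply.
- rewrite (_ : 3 = 2 - -1 :> F); last by ring.
  by rewrite e subrr.
- rewrite (_ : 3 = 2 * (2^-1 - -1) :> F); last by rewrite mulrBr t; ring.
  by rewrite e subrr mulr0.
- rewrite (_ : 3 = 2 * (2 - 2^-1) :> F); last by rewrite mulrBr t; ring.
  by rewrite -e subrr mulr0.
Qed.

Lemma caseM1 : (2:F) != 0 -> (3:F) != 0 -> #|I_L (-1:F)| = (2 + (sq (2:F) || sq (-2:F))%R)%N.
Proof.
move=> h2 h3; have [n12 n1h n2h] := vals h2 h3.
have m0 : (-1:F) != 0 by rewrite oppr_eq0 oner_eq0.
have m1 : (-1:F) != 1.
  apply/negP => /eqP e; move/negP: h2; apply.
  rewrite (_ : 2 = 1 - -1 :> F); last by ring.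
  by rewrite e subrr.
apply: (card_three (a:=-1) (b:=2) (c:=2^-1)) => // v.
rewrite memIL // mem_fl /cands /= !andbT orbF.
have E1 : 1 - (-1) = (2:F) by ring.
have E3 : (-1 - 1)/(-1) = (2:F) by rewrite invrN1 mulrN1; ring.
have E5 : (-1)/(-1 - 1) = (2:F)^-1.
  by rewrite (_ : -1 - 1 = -(2:F)); [rewrite invrN mulrN mulN1r opprK | ring].
have E6 : (-1 - 1) = (-2:F) by ring.
rewrite E3 E5 E1 invrN1 opprK E6 sq1.
by case: (v == -1); case: (v == 2); case: (v == 2^-1); case: (sq (-1:F)); case: (sq (2:F)); case: (sq (-2:F)).
Qed.

Lemma case2 : (2:F) != 0 -> (3:F) != 0 -> #|I_L (2:F)| = (2 + (sq (2:F) || sq (-2:F))%R)%N.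
Proof.
move=> h2 h3; have [n12 n1h n2h] := vals h2 h3.
have t1 : (2:F) != 1.
  apply/negP => /eqP e; move/negP: (oner_neq0 F); apply.
  have H : (1:F) = 2 - 1 by ring.
  by rewrite [X in X == _]H e subrr.
apply: (card_three (a:=2) (b:=-1) (c:=2^-1)) => //; first by rewrite eq_sym.
move=> v; rewrite memIL // mem_fl /cands /= !andbT orbF.
have E21 : (2 - 1) = (1:F) by ring.
have E12 : (1 - 2) = (-1:F) by ring.
rewrite E21 E12 mul1r invr1 mulr1 invrN1 sq1.
by case: (v == -1); case: (v == 2); case: (v == 2^-1); case: (sq (-1:F)); case: (sq (2:F)); case: (sq (-2:F)).
Qed.

Lemma caseH : (2:F) != 0 -> (3:F) != 0 -> #|I_L (2^-1:F)| = (1 + 2 * (sq (2:F) || sq (-2:F))%R)%N.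
Proof.
move=> h2 h3; have [n12 n1h n2h] := vals h2 h3.
have t : (2:F) * 2^-1 = 1 by rewrite divff.
have h0 : (2:F)^-1 != 0 by rewrite invr_eq0.
have h1 : (2:F)^-1 != 1.
  rewrite invr_eq1; apply/negP => /eqP e; move/negP: (oner_neq0 F); apply.
  have H : (1:F) = 2 - 1 by ring.
  by rewrite [X in X == _]H e subrr.
apply: (card_three' (a:=2^-1) (b:=2) (c:=-1)) => //; try by rewrite eq_sym.
move=> v; rewrite memIL // mem_fl /cands /= !andbT orbF.
have Eh : 1 - 2^-1 = (2:F)^-1.
  rewrite (_ : 1 - 2^-1 = 2 * 2^-1 - 2^-1 :> F); last by rewrite t.
  ring.
have Eh' : 2^-1 - 1 = - (2:F)^-1 by rewrite -opprB Eh.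
rewrite Eh' Eh invrK invrN invrK mulrN mulNr mulVf // -invrN !sqV.
by case: (v == -1); case: (v == 2); case: (v == 2^-1); case: (sq (-1:F)); case: (sq (2:F)); case: (sq (-2:F)).
Qed.

Lemma caseM1_3 : (2:F) != 0 -> (3:F) = 0 -> #|I_L (-1:F)| = 1%N.
Proof.
move=> h2 h3.
have two : (2:F) = -1.
  have H : (2:F) - -1 = 3 by ring.
  by apply/eqP; rewrite -subr_eq0 H h3.
have m0 : (-1:F) != 0 by rewrite oppr_eq0 oner_eq0.
have m1 : (-1:F) != 1.
  rewrite -two; apply/negP => /eqP e; move/negP: (oner_neq0 F); apply.
  have H : (1:F) = 2 - 1 by ring.
  by rewrite [X in X == _]H e subrr.
apply: (card_one (a:=-1)) => v; rewrite memIL // mem_fl /cands /= !andbT orbF.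
have E1 : 1 - (-1) = (-1:F) by rewrite -[RHS]two; ring.
have E3 : (-1 - 1)/(-1) = (-1:F) by rewrite invrN1 mulrN1 -[RHS]two; ring.
have E5 : (-1)/(-1 - 1) = (-1:F).
  have H : -1 - 1 = (1:F) by rewrite (_ : -1 - 1 = -(2:F)); [rewrite two opprK | ring].
  by rewrite H invr1 mulr1.
rewrite E3 E5 E1 invrN1.
by case: (v == -1).
Qed.

Lemma caseW (u : F) : (2:F) != 0 -> (3:F) != 0 -> u^+2 - u + 1 = 0 ->
  #|I_L u| = (1 + [|| sq (-1 : F), sq u | sq (1-u)]%R)%N.
Proof.
move=> h2 h3 w.
have u0 : u != 0 by apply/negP => /eqP e; move: w; rewrite e expr0n /= subrr add0r; apply/eqP; exact: oner_neq0.
have u1 : u != 1 by apply/negP => /eqP e; move: w; rewrite e expr1n subrr add0r; apply/eqP; exact: oner_neq0.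
have u10' : 1 - u != 0 by rewrite subr_eq0 eq_sym.
have u10 : u - 1 != 0 by rewrite subr_eq0.
have nu : u != 1 - u.
  apply/negP => /eqP e; move/negP: h3; apply; apply/eqP.
  have H : (3:F) = 4 * (u^+2 - u + 1) - (u - (1 - u))^+2 by ring.
  by rewrite H w [X in X - (1 - u)]e subrr expr0n /= mulr0 subrr.
apply: (card_two (a:=u) (b:=1-u)) => // v.
rewrite memIL // mem_fl /cands /= !andbT orbF.
have E1 : u^-1 = 1 - u.
  apply: (mulfI u0); rewrite divff //; apply/eqP; rewrite eq_sym -subr_eq0.
  have H : u * (1 - u) - 1 = - (u^+2 - u + 1) by ring.
  by rewrite H w oppr0.
have E2 : (u - 1)/u = u.
  have H : u - 1 - u * u = - (u^+2 - u + 1) by ring.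
  have H2 : u - 1 = u * u by apply/eqP; rewrite -subr_eq0 H w oppr0.
  by rewrite H2 mulfK.
have E3 : (1 - u)^-1 = u.
  apply: (mulfI u10'); rewrite divff //; apply/eqP; rewrite eq_sym -subr_eq0.
  have H : (1 - u) * u - 1 = - (u^+2 - u + 1) by ring.
  by rewrite H w oppr0.
have E4 : u / (u - 1) = 1 - u.
  apply: (mulIf u10); rewrite divfK //; apply/eqP; rewrite -subr_eq0.
  have H : u - (1 - u) * (u - 1) = u^+2 - u + 1 by ring.
  by rewrite H w.
rewrite E2 E4 E1 E3.
by case: (v == u); case: (v == 1 - u); case: (sq (-1:F)); case: (sq u); case: (sq (1-u)).
Qed.
End M.

Lemma chiNZ (F : finFieldType) (x : F) : x != 0 -> chi2 x = if sq x then 1 else -1.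
Proof. by move=> x0; rewrite chiE (negPf x0). Qed.

Lemma sqN (F : finFieldType) (x : F) : sq (-1 : F) -> sq (-x) = sq x.
Proof.
move=> s; apply/idP/idP => H.
  by rewrite -[x]opprK -mulN1r; apply: sq_mul.
by rewrite -mulN1r; apply: sq_mul.
Qed.

Lemma sq_excl (F : finFieldType) (x : F) : x != 0 -> sq x -> sq (-x) -> sq (-1 : F).
Proof.
move=> x0 s1 s2; rewrite (_ : -1 = (-x) * x^-1); last by rewrite mulNr divff.
by apply: sq_mul => //; apply: sq_inv.
Qed.

Lemma q8_p3 (F : finFieldType) : 3 \in [pchar F] -> (#|F| %% 8 = 1 \/ #|F| %% 8 = 3)%N.
Proof.
move=> hp; have [k ->] := cardF hp.
elim: k.+1 => [|n IH]; first by left.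
rewrite expnS -modnMmr; case: IH => ->; by [right|left].
Qed.

Lemma q4_13 (m : nat) : (m %% 2 = 1)%N -> (m %% 4 = 1 \/ m %% 4 = 3)%N.
Proof.
move=> q2; have r := ltn_pmod m (isT : (0 < 4)%N).
have e := modn_dvdm m (isT : (2 %| 4)%N); rewrite q2 in e.
move: (m %% 4)%N r e => t r e; lia.
Qed.

Theorem mainTheorem2 (F : finFieldType) (p : nat)
    (hp : p \in [pchar F]) (hp3 : (3 <= p)%N)
    (u : F) (hu0 : u != 0) (hu1 : u != 1) :
  let q := #|F| in
  let n := #|I_L u| in
  ((u == -1) && (p == 3%N) -> n = 1%N) /\
  ((u \in [:: -1; 2; 2^-1]) && (q %% 8 \in [:: 1; 3; 7])%N && (3 < p)%N
     -> n = 3%N) /\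
  ((u \in [:: -1; 2]) && ((q %% 8)%N == 5%N) -> n = 2%N) /\
  ((u == 2^-1) && ((q %% 8)%N == 5%N) -> n = 1%N) /\
  ((u ^+ 2 - u + 1 == 0) && ((q %% 12)%N == 1%N) && (3 < p)%N -> n = 2%N) /\
  ((u ^+ 2 - u + 1 == 0) && ((q %% 12)%N != 1%N) -> n = 1%N) /\
  ((chi2 (-1 : F) == -1) && ~~ inB u -> n = 3%N) /\
  ((chi2 (-1 : F) == 1) && (chi2 u == -1) && (chi2 (1 - u) == -1) && ~~ inB u
     -> n = 2%N) /\
  ((chi2 (-1 : F) == 1) && (chi2 u * chi2 (1 - u) == -1) && ~~ inB u
     -> n = 4%N) /\
  ((chi2 (-1 : F) == 1) && (chi2 u == 1) && (chi2 (1 - u) == 1) && ~~ inB u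
     -> n = 6%N).
Proof.
move=> q n; subst q n.
have h2 := two0 hp hp3.
have pr := pcharf_prime hp.
have h3 : (3 < p)%N -> (3:F) != 0.
  move=> p3; rewrite -(dvdn_pcharf hp 3); apply/negP => /(dvdn_leq (isT : (0 < 3)%N)); lia.
have p3q : p = 3%N -> (#|F| %% 8 = 1 \/ #|F| %% 8 = 3)%N.
  by move=> e; apply: q8_p3; move: hp; rewrite e.
have q2 : (#|F| %% 2 = 1)%N by rewrite modn2 (q_odd hp hp3).
have m10 : (-1 : F) != 0 by rewrite oppr_eq0 oner_eq0.
have u10 : u - 1 != 0 by rewrite subr_eq0.
have u10' : 1 - u != 0 by rewrite subr_eq0 eq_sym.
split; [|split; [|split; [|split; [|split; [|split; [|split; [|split; [|split]]]]]]]].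
- case/andP => /eqP -> /eqP e; subst p.
  exact: caseM1_3 h2 (pcharf0 hp).
- case/andP => /andP [hu hq] p3.
  have G : sq (2:F) || sq (-2:F).
    move: hq; rewrite !inE => /orP [/eqP e|/orP [/eqP e|/eqP e]].
    + by rewrite (S3 hp hp3 e).
    + by rewrite (S5b hp hp3 e) orbT.
    + by rewrite (S5a hp hp3 e).
  move: hu; rewrite !inE => /orP [/eqP ->|/orP [/eqP ->|/eqP ->]].
  + by rewrite caseM1 // ?h3 // G.
  + by rewrite case2 // ?h3 // G.
  + by rewrite caseH // ?h3 // G.
- case/andP => hu /eqP hq.
  have p3 : (3 < p)%N.
    case: (ltngtP 3 p) => // e; first by move: hp3; rewrite leqNgt e.
    by case: (p3q (esym e)); rewrite hq.
  have /andP [/negPf n2 /negPf n2'] := S4 hp hp3 hq.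
  move: hu; rewrite !inE => /orP [/eqP ->|/eqP ->].
  + by rewrite caseM1 // ?h3 // n2 n2'.
  + by rewrite case2 // ?h3 // n2 n2'.
- case/andP => /eqP -> /eqP hq.
  have p3 : (3 < p)%N.
    case: (ltngtP 3 p) => // e; first by move: hp3; rewrite leqNgt e.
    by case: (p3q (esym e)); rewrite hq.
  have /andP [/negPf n2 /negPf n2'] := S4 hp hp3 hq.
  by rewrite caseH // ?h3 // n2 n2'.
- case/andP => /andP [/eqP w /eqP hq] p3.
  have q4 : (#|F| %% 4 = 1)%N by rewrite -(modn_dvdm #|F| (isT : (4 %| 12)%N)) hq.
  by rewrite caseW // ?h3 // (S1 hp hp3 q4).
- case/andP => /eqP w hq.
  have u3 : u^+3 = -1.
    have H : u^+3 = (u+1)*(u^+2-u+1) - 1 by ring.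
    by rewrite H w mulr0 sub0r.
  case: (ltngtP 3 p) => [p3|p3|e]; last first.
  + subst p; have h30 : (3:F) = 0 := pcharf0 hp.
    have ue : u = -1.
      apply/eqP; rewrite -addr_eq0; apply/eqP.
      have H : (u + 1)^+2 = (u^+2 - u + 1) + 3 * u by ring.
      by move: H; rewrite w h30 mul0r addr0 => /eqP; rewrite expf_eq0 /= => /eqP.
    by rewrite ue; apply: caseM1_3.
  + by move: hp3; rewrite leqNgt p3.
  have h30 := h3 p3.
  have q4 : (#|F| %% 4 = 3)%N.
    have [k qk] := cardF hp.
    case: (q4_13 q2) => [q41|//].
    have [q9|q5] : (#|F| %% 12 = 9 \/ #|F| %% 12 = 5)%N.
      have r := ltn_pmod #|F| (isT : (0 < 12)%N).
      have e4 : ((#|F| %% 12) %% 4 = 1)%N by rewrite modn_dvdm // q41.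
      move: (#|F| %% 12)%N r e4 hq => t r e4 /eqP hq; lia.
      have d3 : (3 %| #|F|)%N by rewrite /dvdn -(modn_dvdm #|F| (isT : (3 %| 12)%N)) q9.
      move: d3; rewrite qk Euclid_dvdX // => /andP [d3 _].
      by move: d3; rewrite dvdn_prime2 // => /eqP e; move: p3; rewrite -e.
    have e1 := expq1 hu0.
    have eq : (#|F|.-1 = 3 * (2 * (2 * (#|F| %/ 12)) + 1) + 1)%N.
      have := divn_eq #|F| 12; rewrite q5; move: (#|F| %/ 12)%N => t ->; lia.
    rewrite eq exprD exprM u3 exprD exprM sqrrN !expr1n mul1r expr1 expr1 mulN1r in e1.
    have : u = -1 by rewrite -e1 opprK.
    move=> ue; move: w; rewrite ue => /eqP; rewrite (_ : (-1:F)^+2 - -1 + 1 = 3) //; last by ring.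
    by rewrite (negPf h30).
  have nsm1 := S2 hp hp3 q4.
  have nsu : ~~ sq u.
    apply/negP => su; move/negP: nsm1; apply; rewrite -u3 exprS.
    by apply: sq_mul => //; apply/existsP; exists u.
  have e1u : 1 - u = u^-1.
    apply: (mulfI hu0); rewrite divff //.
    have H : u * (1 - u) = 1 - (u^+2 - u + 1) by ring.
    by rewrite H w subr0.
  have ns1u : ~~ sq (1 - u) by rewrite e1u sqV.
  by rewrite caseW // (negPf nsm1) (negPf nsu) (negPf ns1u).
- case/andP => hc nB.
  have nsm1 : ~~ sq (-1 : F) by move: hc; rewrite chiNZ //; case: (sq (-1 : F)).
  have q4 : (#|F| %% 4 = 3)%N.
    case: (q4_13 q2) => [q41|//].
    by move: nsm1; rewrite (S1 hp hp3 q41).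
  rewrite card_gen // (negPf nsm1).
  have A := S6 hp hp3 q4 hu0.
  have B := S6 hp hp3 q4 u10; rewrite opprB in B.
  have C : ~~ (sq u && sq (-u)).
    by apply/negP => /andP [s1 s2]; move/negP: nsm1; apply; apply: (sq_excl hu0).
  have D : ~~ (sq (u-1) && sq (1-u)).
    apply/negP => /andP [s1 s2]; move/negP: nsm1; apply; apply: (sq_excl u10) => //.
    by rewrite opprB.
  by move: A B C D; case: (sq u); case: (sq (-u)); case: (sq (u-1)); case: (sq (1-u)).
- case/andP => /andP [/andP [hc hcu] hc1] nB.
  have sm1 : sq (-1 : F) by move: hc; rewrite chiNZ //; case: (sq (-1 : F)).
  have nsu : ~~ sq u by move: hcu; rewrite chiNZ //; case: (sq u).
  have ns1 : ~~ sq (1-u) by move: hc1; rewrite chiNZ //; case: (sq (1-u)).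
  rewrite card_gen // (sqN u sm1) -[u - 1]opprB (sqN (1-u) sm1).
  by rewrite sm1 (negPf nsu) (negPf ns1).
- case/andP => /andP [hc hcu] nB.
  have sm1 : sq (-1 : F) by move: hc; rewrite chiNZ //; case: (sq (-1 : F)).
  rewrite card_gen // (sqN u sm1) -[u - 1]opprB (sqN (1-u) sm1) sm1.
  by move: hcu; rewrite !chiNZ //; case: (sq u); case: (sq (1-u)).
- case/andP => /andP [/andP [hc hcu] hc1] nB.
  have sm1 : sq (-1 : F) by move: hc; rewrite chiNZ //; case: (sq (-1 : F)).
  have su : sq u by move: hcu; rewrite chiNZ //; case: (sq u).
  have s1 : sq (1-u) by move: hc1; rewrite chiNZ //; case: (sq (1-u)).
  by rewrite card_gen // (sqN u sm1) -[u - 1]opprB (sqN (1-u) sm1) sm1 su s1.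
Qed.
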